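(* If a depth-proper mttr $M$ is finite-nesting, then $M$ is LSHI, i.e., there is $b\in\mathbb N$ with $H(M(t))\le b\cdot|t|$ for all input trees $t$.
   Context: Trees: for a ranked alphabet $\Sigma$, $T_\Sigma$ is the set of finite ranked ordered trees over $\Sigma$, and $T_\Sigma(A)$ the trees over $\Sigma$ with additional rank-0 symbols from $A$. $X_k=\{x_1,\dots,x_k\}$ are input variables and $Y=\{y_1,y_2,\dots\}$, $Y_m=\{y_1,\dots,y_m\}$ are parameters. A (deterministic bottom-up) tree automaton $(P,\Sigma,h)$ has a finite state set $P$ and maps $h_\sigma:P^k\to P$ for $\sigma\in\Sigma^{(k)}$; $\hat h:T_\Sigma\to P$ is its run and $L_p=\{s\in T_\Sigma\mid \hat h(s)=p\}$. A (total, deterministic) macro tree transducer with look-ahead (mttr) is $M=(Q,P,\Sigma,\Delta,q_0,R,h)$ where $Q$ is a ranked alphabet of states, $\Sigma,\Delta$ are ranked input/output alphabets, $(P,\Sigma,h)$ is a tree automaton (the look-ahead), $q_0\in Q^{(0)}$, and for each $q\in Q^{(m)}$, $\sigma\in\Sigma^{(k)}$, $p_1,\dots,p_k\in P$ there is exactly one rule $\langle q,\sigma(x_1:p_1,\dots,x_k:p_k)\rangle(y_1,\dots,y_m)\to t$ with $t\in T_{\Delta\cup\langle Q,X_k\rangle}(Y_m)$, where $\langle q',x_i\rangle$ has the rank of $q'$. For $q\in Q^{(m)}$ and $s=\sigma(s_1,\dots,s_k)$, $M_q(s)\in T_\Delta(Y_m)$ is obtained from the right-hand side of the rule for $(q,\sigma,\hat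 h(s_1),\dots,\hat h(s_k))$ by replacing (recursively, innermost first) each subtree $\langle q',x_i\rangle(\xi_1,\dots,\xi_n)$ by $M_{q'}(s_i)$ with each $y_j$ replaced by (the result for) $\xi_j$; $M(s)=M_{q_0}(s)$. Extension and reachability: $\hat M$ is the mttr with input alphabet $\Sigma\cup P$ (each $p\in P$ a rank-0 input symbol with $\hat h_p()=p$), output alphabet $\Delta\cup\langle Q,P\rangle$ (where $\langle q,p\rangle$ has the rank of $q$), the rules of $M$ plus the rules $\langle q,p\rangle(y_1,\dots,y_m)\to\langle q,p\rangle(y_1,\dots,y_m)$ for $q\in Q^{(m)}$, $p\in P$. A pair $\langle q,p\rangle$ is reachable if it occurs in $\hat M(s)$ for some $s\in T_\Sigma(P)$. Depth-proper: for $y\in Y$ and $s\in T_\Delta(Y)$, $\lfloor s\rfloor_y$ is obtained from $s$ by replacing every maximal subtree not containing $y$ by a new rank-0 symbol $\$$. $M$ is depth-proper if for every reachable $\langle q,p\rangle$ with $q\in Q^{(m)}$ and every $y\in Y_m$, the set $\{\lfloor M_q(s)\rfloor_y\mid s\in L_p\}$ is infinite. Size and height: $|t|$ is the number of nodes of $t$; the height $H(t)$ is the number of nodes on a longest root-to-leaf path. Nesting: for $t\in T_\Sigma(P)$, the nesting of a root-to-leaf path of $\hat M(t)$ is the number of its nodes labeled by symbols of $\langle Q,P\rangle$. $M$ is finite-nesting if there is $b\in\mathbb N$ such that for every $t\in T_\Sigma(P)$ containing exactly one leaf labeled by a symbol of $P$, every root-to-leaf path of $\hat M(t)$ has nesting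 at most $b$. *)

(* Defs.v *)
From mathcomp Require Import all_boot.
From Stdlib Require List.

Set Implicit Arguments.
Unset Strict Implicit.
Unset Printing Implicit Defensive.

Inductive tree (A : Type) : Type := Node of A & seq (tree A).
Arguments Node {A} _ _.

Fixpoint tmap (A B : Type) (f : A -> B) (t : tree A) : tree B :=
  match t with Node a ts => Node (f a) (map (tmap f) ts) end.

Fixpoint wf (A : Type) (rk : A -> nat) (t : tree A) : bool :=
  match t with Node a ts => (size ts == rk a) && all (wf rk) ts end.

Fixpoint tsize (A : Type) (t : tree A) : nat :=
  match t with Node _ ts => (sumn (map (@tsize A) ts)).+1 end.

Fixpoint height (A : Type) (t : tree A) : nat :=
  match t with Node _ ts => (foldr maxn 0 (map (@height A) ts)).+1 end.

Fixpoint has_label (A : Type) (f : A -> bool) (t : tree A) : bool :=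
  match t with Node a ts => f a || has (has_label f) ts end.

Fixpoint count_label (A : Type) (f : A -> bool) (t : tree A) : nat :=
  match t with Node a ts => f a + sumn (map (count_label f) ts) end.

Fixpoint paths (A : Type) (t : tree A) : seq (seq A) :=
  match t with
  | Node a [::] => [:: [:: a]]
  | Node a ts => map (cons a) (flatten (map (@paths A) ts))
  end.

Record ranked := Ranked { sym : finType; rk : sym -> nat }.

(* labels of right-hand sides: output symbols of Delta, calls <q', x_i>
   (child index i is 0-based, i.e. x_{i+1}), and parameters y_{j+1}. *)
Inductive rlab (D Q : ranked) : Type :=
  | RD of sym D
  | RQ of sym Q & nat
  | RY of nat.
Arguments RD {D Q} _.
Arguments RQ {D Q} _ _.
Arguments RY {D Q} _.

(* well-formed rhs for a rule with k input variables and m parameters: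
   t in T_{Delta u <Q,X_k>}(Y_m) *)
Fixpoint wf_rhs (D Q : ranked) (k m : nat) (t : tree (rlab D Q)) : bool :=
  match t with
  | Node (RD d) ts => (size ts == rk d) && all (wf_rhs k m) ts
  | Node (RQ q i) ts => (i < k) && (size ts == rk q) && all (wf_rhs k m) ts
  | Node (RY j) ts => (j < m) && (size ts == 0)
  end.

(* A total deterministic macro tree transducer with look-ahead
   M = (Q, P, Sigma, Delta, q0, R, h). *)
Record mttr (Sg D : ranked) := Mttr {
  st : ranked;
  la : finType;
  lah : sym Sg -> seq la -> la;
  q0 : sym st;
  rules : sym st -> sym Sg -> seq la -> tree (rlab D st);
                         (* rhs of <q, sigma(x_1:p_1,..,x_k:p_k)>(y_1..y_m) *)
  q0_rk : rk q0 = 0;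
  rules_wf : forall q a ps, size ps = rk a -> wf_rhs (rk a) (rk q) (rules q a ps)
}.
Arguments st {Sg D} _.
Arguments la {Sg D} _.
Arguments lah {Sg D} _ _ _.
Arguments q0 {Sg D} _.
Arguments rules {Sg D} _ _ _ _.

(* Output labels of hat M: Delta, <Q,P>, parameters y_{j+1}. *)
Inductive olab (D Q : ranked) (P : Type) : Type :=
  | OD of sym D
  | OQP of sym Q & P
  | OY of nat.
Arguments OD {D Q P} _.
Arguments OQP {D Q P} _ _.
Arguments OY {D Q P} _.

Section Semantics.
Variables (Sg D : ranked) (M : mttr Sg D).
Local Notation Q := (sym (st M)).
Local Notation P := (la M).
Local Notation otree := (tree (olab D (st M) P)).

(* input trees of hat M: T_{Sigma u P}, P-symbols of rank 0 *)
Definition itree := tree (sym Sg + P)%type.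

Definition ilab_rk (x : sym Sg + P) : nat :=
  match x with inl a => rk a | inr _ => 0 end.

Fixpoint run (t : itree) : P :=
  match t with
  | Node (inl a) ts => lah M a (map run ts)
  | Node (inr p) _ => p
  end.

Fixpoint subst (f : nat -> otree) (t : otree) : otree :=
  match t with
  | Node (OY j) _ => f j
  | Node l ts => Node l (map (subst f) ts)
  end.

Definition yleaf (j : nat) : otree := Node (OY j) [::].

(* evaluation of a right-hand side, given the translations Ms of the
   direct subtrees (Ms`_i q' = M_{q'}(s_{i+1})) *)
Fixpoint evalr (Ms : seq (Q -> otree)) (r : tree (rlab D (st M))) : otree :=
  match r with
  | Node (RD d) ts => Node (OD d) (map (evalr Ms) ts)
  | Node (RY j) _ => yleaf j
  | Node (RQ q i) ts =>
      subst (fun j => nth (yleaf j) (map (evalr Ms) ts) j)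
            (nth (fun _ => yleaf 0) Ms i q)
  end.

(* hat M_q(t) for t in T_Sigma(P); for t in T_Sigma this is M_q(t). *)
Fixpoint Mhat (t : itree) : Q -> otree :=
  match t with
  | Node (inr p) _ => fun q => Node (OQP q p) (mkseq yleaf (rk q))
  | Node (inl a) ts => fun q => evalr (map Mhat ts) (rules M q a (map run ts))
  end.

Definition inj (s : tree (sym Sg)) : itree := tmap inl s.

Definition Mq (q : Q) (s : tree (sym Sg)) : otree := Mhat (inj s) q.
Definition Mout (s : tree (sym Sg)) : otree := Mq (q0 M) s.

Definition is_qp (q : Q) (p : P) (l : olab D (st M) P) : bool :=
  match l with OQP q' p' => (q' == q) && (p' == p) | _ => false end.

Definition reachable (q : Q) (p : P) : Prop :=
  exists t : itree, wf ilab_rk t /\ has_label (is_qp q p) (Mhat t (q0 M)).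

(* floor(s)_y : maximal subtrees not containing y_{j+1} replaced by $ (= None) *)
Definition is_y (j : nat) (l : olab D (st M) P) : bool :=
  match l with OY j' => j' == j | _ => false end.

Fixpoint cut (j : nat) (t : otree) : tree (option (olab D (st M) P)) :=
  match t with
  | Node l ts =>
      if has_label (is_y j) t then Node (Some l) (map (cut j) ts)
      else Node None [::]
  end.

(* depth-proper: for reachable <q,p> and y in Y_m, the set
   { floor(M_q(s))_y | s in L_p } is infinite (not covered by any finite list) *)
Definition depth_proper : Prop :=
  forall (q : Q) (p : P), reachable q p ->
  forall j, j < rk q ->
  forall l : seq (tree (option (olab D (st M) P))),
    exists s : tree (sym Sg),
      [/\ wf (@rk Sg) s, run (inj s) = p & ~ List.In (cut j (Mq q s)) l].

Definition is_P (x : sym Sg + P) : bool := if x is inr _ then true else false.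

Definition is_QP (l : olab D (st M) P) : bool := if l is OQP _ _ then true else false.

Definition nesting (pi : seq (olab D (st M) P)) : nat := count is_QP pi.

Definition finite_nesting : Prop :=
  exists b : nat, forall t : itree,
    wf ilab_rk t -> count_label is_P t = 1 ->
    forall pi, List.In pi (paths (Mhat t (q0 M))) -> nesting pi <= b.

Definition LSHI : Prop :=
  exists b : nat, forall t : tree (sym Sg),
    wf (@rk Sg) t -> height (Mout t) <= b * tsize t.

End Semantics.

(* Main.v *)
Require Import Defs.
From mathcomp Require Import all_boot.
Set Implicit Arguments.
Unset Strict Implicit.
Unset Printing Implicit Defensive.


Section TreeInd.
Variable A : Type.
Variable Pr : tree A -> Prop.
Hypothesis H : forall a ts, (forall u, List.In u ts -> Pr u) -> Pr (Node a ts).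
Fixpoint tree_ind2 (t : tree A) : Pr t :=
  match t with Node a ts => H a ((fix go (ts : seq (tree A)) : forall u, List.In u ts -> Pr u :=
     match ts return forall u, List.In u ts -> Pr u with
     | [::] => fun u F => False_ind _ F
     | v :: vs => fun u Hin => match Hin with
                  | or_introl E => eq_ind v Pr (tree_ind2 v) u E
                  | or_intror H' => go vs u H' end end) ts) end.
End TreeInd.

Lemma max_le (T : Type) (h : T -> nat) ts B :
  (forall u, List.In u ts -> h u <= B) -> foldr maxn 0 (map h ts) <= B.
Proof.
elim: ts => //= u us IH H; rewrite geq_max H /=; last by left.
by apply: IH => v Hv; apply: H; right.
Qed.

Lemma le_max (T : Type) (h : T -> nat) ts u :
  List.In u ts -> h u <= foldr maxn 0 (map h ts).
Proof.
elim: ts => //= v vs IH [<-|Hin]; first by rewrite leq_maxl.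
by rewrite (leq_trans (IH Hin)) // leq_maxr.
Qed.

Lemma max_mono (T : Type) (h h' : T -> nat) ts :
  (forall u, List.In u ts -> h u <= h' u) ->
  foldr maxn 0 (map h ts) <= foldr maxn 0 (map h' ts).
Proof.
move=> H; apply: max_le => u Hu; exact: leq_trans (H u Hu) (le_max h' Hu).
Qed.

Lemma max_attained (T : Type) (h : T -> nat) ts :
  ts <> [::] -> exists2 u, List.In u ts & foldr maxn 0 (map h ts) = h u.
Proof.
elim: ts => // v vs IH _.
case: vs IH => [|w ws] IH.
  by exists v; [left | rewrite /= maxn0].
have [u Hu E] := IH ltac:(done).
change (exists2 u0, List.In u0 (v :: w :: ws) & maxn (h v) (foldr maxn 0 (map h (w :: ws))) = h u0).
rewrite E.
case: (leqP (h u) (h v)) => Hc.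
  by exists v; [left|].
by exists u; [right|].
Qed.

Lemma map_ext_In (T U : Type) (f g : T -> U) ts :
  (forall u, List.In u ts -> f u = g u) -> map f ts = map g ts.
Proof.
elim: ts => //= u us IH H; rewrite H; last by left.
by rewrite IH // => v Hv; apply: H; right.
Qed.

Lemma nth_In (T : Type) (x0 : T) ts j : j < size ts -> List.In (nth x0 ts j) ts.
Proof.
elim: ts j => //= u us IH [|j] /= Hj; first by left.
by right; apply: IH.
Qed.

Lemma le_sumn (T : Type) (h : T -> nat) ts u :
  List.In u ts -> h u <= sumn (map h ts).
Proof.
elim: ts => //= v vs IH [<-|Hin]; first by rewrite leq_addr.
by rewrite (leq_trans (IH Hin)) // leq_addl.
Qed.

Definition mb (g : nat -> nat) n := foldr maxn 0 (map g (iota 0 n)).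

Lemma In_iota j m n : m <= j < m + n -> List.In j (iota m n).
Proof.
elim: n m => [|n IH] m /=; first by rewrite addn0; case/andP=> H1 H2; move: (leq_trans H2 H1); rewrite ltnn.
case/andP; rewrite leq_eqVlt => /orP [/eqP ->|Hm Hj]; first by left.
by right; apply: IH; rewrite Hm addSnnS.
Qed.

Lemma mb_ge g n j : j < n -> g j <= mb g n.
Proof. by move=> Hj; apply: (le_max g); apply: In_iota. Qed.

Lemma In_iota' j m n : List.In j (iota m n) -> m <= j < m + n.
Proof.
elim: n m => [|n IH] m //= [<-|/IH]; first by rewrite leqnn addnS ltnS leq_addr.
by rewrite addSnnS => /andP [/ltnW -> ->].
Qed.

Lemma mb_le g n B : (forall j, j < n -> g j <= B) -> mb g n <= B.
Proof. by move=> H; apply: max_le => j /In_iota' /andP [_]; apply: H. Qed.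

Lemma mb_mono g g' n : (forall j, j < n -> g j <= g' j) -> mb g n <= mb g' n.
Proof. by move=> H; apply: mb_le => j Hj; apply: leq_trans (H j Hj) (mb_ge _ Hj). Qed.


Section W.
Variables (D Q : ranked) (P : Type).
Local Notation L := (olab D Q P).

Fixpoint wy (W : L -> nat) (g : nat -> nat) (t : tree L) : nat :=
  match t with
  | Node (OY j) _ => g j
  | Node l ts => W l + foldr maxn 0 (map (wy W g) ts)
  end.

Lemma wy_node W g l ts : (if l is OY _ then false else true) ->
  wy W g (Node l ts) = W l + foldr maxn 0 (map (wy W g) ts).
Proof. by case: l. Qed.

Lemma wy_mono W W' g g' t : (forall l, W l <= W' l) -> (forall j, g j <= g' j) ->
  wy W g t <= wy W' g' t.
Proof.
move=> HW Hg; elim/tree_ind2: t => [[d|q p|j] ts IH] //=;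
  by rewrite leq_add // max_mono.
Qed.

Lemma wy_add W W' t : wy (fun l => W l + W' l) (fun _ => 0) t <=
  wy W (fun _ => 0) t + wy W' (fun _ => 0) t.
Proof.
elim/tree_ind2: t => [[d|q p|j] ts IH] //=;
  rewrite addnACA leq_add2l; apply: max_le => u Hu;
  (apply: leq_trans (IH u Hu) _; apply: leq_add; exact: le_max).
Qed.

Lemma wy_sum (I : finType) (F : I -> L -> nat) t :
  wy (fun l => \sum_i F i l) (fun _ => 0) t <= \sum_i wy (F i) (fun _ => 0) t.
Proof.
elim/tree_ind2: t => [[d|q p|j] ts IH] /=; last by rewrite big1.
all: rewrite big_split /= leq_add2l; apply: max_le => u Hu;
  apply: leq_trans (IH u Hu) _; apply: leq_sum => i _; exact: (le_max (wy (F i) _)).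
Qed.

Lemma wy_scale K W t : wy (fun l => K * W l) (fun _ => 0) t <= K * wy W (fun _ => 0) t.
Proof.
elim/tree_ind2: t => [[d|q p|j] ts IH] /=; rewrite ?muln0 //;
  rewrite mulnDr leq_add2l; apply: max_le => u Hu;
  (apply: leq_trans (IH u Hu) _; rewrite leq_mul2l; apply/orP; right; exact: le_max).
Qed.

Lemma wy_OY t : wy (fun l => if l is OY _ then 1 else 0) (fun _ => 0) t = 0.
Proof.
elim/tree_ind2: t => [[d|q p|j] ts IH] //=;
  by apply/eqP; rewrite -leqn0; apply: max_le => u Hu; rewrite IH.
Qed.

Lemma wy_noOY W g t : wy (fun _ => 0) (fun _ => 1) t = 0 ->
  wy W g t = foldr maxn 0 (map (wy W g) [::]) + wy W g t.
Proof. by []. Qed.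

Lemma max0_In (T : Type) (h : T -> nat) ts u :
  foldr maxn 0 (map h ts) = 0 -> List.In u ts -> h u = 0.
Proof. by move=> H Hu; apply/eqP; rewrite -leqn0 -H; apply: le_max. Qed.

Lemma height_wy t : wy (fun _ => 0) (fun _ => 1) t = 0 ->
  height t = wy (fun _ => 1) (fun _ => 0) t.
Proof.
elim/tree_ind2: t => [[d|q p|j] ts IH] //= H; rewrite add1n; do 2 f_equal;
  (apply: map_ext_In => u Hu; apply: IH => //; exact: max0_In H Hu).
Qed.

Lemma In_flatten_map (T U : Type) (f : T -> seq U) ts v x :
  List.In v ts -> List.In x (f v) -> List.In x (flatten (map f ts)).
Proof.
elim: ts => //= w ws IH [<-|Hv] Hx; first by apply: List.in_or_app; left.
by apply: List.in_or_app; right; apply: IH.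
Qed.

Lemma paths_wy (f : L -> bool) t : exists2 pi, List.In pi (paths t) &
  wy (fun l => f l) (fun _ => 0) t <= count f pi.
Proof.
elim/tree_ind2: t => l ts IH.
case: ts IH => [|u us] IH.
  exists [:: l]; first by left.
  by case: l => //= *; rewrite ?addn0.
have [v Hv E] := max_attained (wy (fun l => f l) (fun _ => 0)) (ltac:(done) : u :: us <> [::]).
have [pi Hpi Hle] := IH v Hv.
exists (l :: pi).
  change (List.In (l :: pi) (map (cons l) (flatten (map (@paths _) (u :: us))))).
  by apply: List.in_map; apply: In_flatten_map Hv Hpi.
case: l E => [d|q p|j] E; [rewrite wy_node // E /= leq_add2l //|rewrite wy_node // E /= leq_add2l //|by []].
Qed.
End W.


Lemma all_In (T : Type) (p : pred T) s u : all p s -> List.In u s -> p u.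
Proof.
elim: s => //= v vs IH /andP [Hv Hs] [<-|Hu] //; exact: IH.
Qed.

Lemma nhas_In (T : Type) (p : pred T) s u : ~~ has p s -> List.In u s -> ~~ p u.
Proof.
elim: s => //= v vs IH; rewrite negb_or => /andP [Hv Hs] [<-|Hu] //; exact: IH.
Qed.

Section S.
Variables (Sg D : ranked) (M : mttr Sg D).
Local Notation Q := (sym (st M)).
Local Notation P := (la M).
Local Notation L := (olab D (st M) P).
Local Notation OT := (tree L).
Local Notation def0 := (fun _ : Q => yleaf M 0).

Lemma wy_subst W g f (T : OT) :
  wy W g (subst f T) = wy W (fun j => wy W g (f j)) T.
Proof.
elim/tree_ind2: T => [[d|q p|j] ts IH] //=; congr (_ + _); congr (foldr _ _ _);
  rewrite -map_comp; apply: map_ext_In => u Hu; exact: IH.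
Qed.

Lemma evalr_mono W1 W2 g (HW : forall l, W1 l <= W2 l) (Ms1 Ms2 : seq (Q -> OT))
  (H : forall i q g, wy W1 g (nth def0 Ms1 i q) <= wy W2 g (nth def0 Ms2 i q)) r :
  wy W1 g (evalr Ms1 r) <= wy W2 g (evalr Ms2 r).
Proof.
elim/tree_ind2: r => [[d|q i|j] ts IH] /=.
- rewrite leq_add // -!map_comp; apply: max_mono => u Hu; exact: IH.
- rewrite !wy_subst; apply: leq_trans (H i q _) _; apply: wy_mono => // j.
  case: (ltnP j (size ts)) => Hj.
    rewrite !(nth_map (Node (RY 0) [::])) //; apply: IH; exact: nth_In.
  by rewrite !nth_default ?size_map.
- by [].
Qed.

Definition rdok W e (r : tree (rlab D (st M))) :=
  ~~ has_label (fun l => if l is RD d then e < W (OD d : L) else false) r.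

Lemma evalr_bound W e (Ms : seq (Q -> OT)) k m g
  (H : forall i q g, i < k -> wy W g (nth def0 Ms i q) <= mb g (rk q)) r :
  wf_rhs k m r -> rdok W e r -> wy W g (evalr Ms r) <= e * Defs.tsize r + mb g m.
Proof.
elim/tree_ind2: r => [[d|q i|j] ts IH] /=.
- move=> /andP [_ Hall]; rewrite /rdok /= negb_or -ltnNge => /andP [Hd Hn].
  rewrite mulnS -addnA leq_add // -map_comp; apply: max_le => u Hu /=.
  apply: leq_trans (IH u Hu (all_In Hall Hu) (nhas_In Hn Hu)) _.
  by rewrite leq_add2r leq_mul2l le_sumn ?orbT.
- move=> /andP [/andP [Hi /eqP Hs] Hall]; rewrite /rdok /= => Hn.
  rewrite wy_subst; apply: leq_trans (H i q _ Hi) _; apply: mb_le => j Hj.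
  rewrite -Hs in Hj.
  rewrite (nth_map (Node (RY 0) [::])) //.
  have Hu := nth_In (Node (RY 0) [::]) Hj.
  apply: leq_trans (IH _ Hu (all_In Hall Hu) (nhas_In Hn Hu)) _.
  rewrite leq_add2r leq_mul2l; apply/orP; right; apply: ltnW; rewrite ltnS; exact: (le_sumn (@Defs.tsize _) Hu).
- move=> /andP [Hj _] _; exact: leq_trans (mb_ge g Hj) (leq_addl _ _).
Qed.
End S.

Section S2.
Variables (Sg D : ranked) (M : mttr Sg D).
Local Notation Q := (sym (st M)).
Local Notation P := (la M).
Local Notation L := (olab D (st M) P).
Local Notation OT := (tree L).
Local Notation def0 := (fun _ : Q => yleaf M 0).
Local Notation IT := (itree M).

Lemma wy_leaf W g q p :
  wy W g (Node (OQP q p) (mkseq (yleaf M) (rk q)) : OT) = W (OQP q p) + mb g (rk q).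
Proof. by rewrite /= /mkseq -map_comp. Qed.

Lemma Mhat_zero W (bad : sym Sg + P -> bool)
  (Hs : forall a q ps, ~~ bad (inl a) -> rdok W 0 (rules M q a ps))
  (Hp : forall p q, ~~ bad (inr p) -> W (OQP q p) = 0) (t : IT) :
  wf (@ilab_rk _ _ M) t -> ~~ has_label bad t -> forall q g, wy W g (Mhat t q) <= mb g (rk q).
Proof.
elim/tree_ind2: t => [[a|p] ts IH] Hwf Hb q g.
- move: Hwf Hb => /= /andP [/eqP Hsz Hall]; rewrite negb_or => /andP [Ha Hn].
  have := evalr_bound (Ms := map (@Mhat _ _ M) ts) (k := rk a) (m := rk q) (e := 0) g _
    (@rules_wf _ _ M q a (map (@run _ _ M) ts) ltac:(by rewrite size_map)) (Hs a q _ Ha).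
  rewrite mul0n add0n; apply => i q' g' Hi.
  rewrite -Hsz in Hi.
  rewrite (nth_map (Node (inl a) [::])) //.
  have Hu := nth_In (Node (inl a) [::]) Hi.
  exact: IH _ Hu (all_In Hall Hu) (nhas_In Hn Hu) q' g'.
- change (wy W g (Node (OQP q p) (mkseq (yleaf M) (rk q))) <= mb g (rk q)).
  rewrite (wy_leaf W g q p) Hp //; move: Hb; rewrite /= negb_or => /andP [] //.
Qed.

Lemma Mhat_root W (bad : sym Sg + P -> bool)
  (Hs : forall a q ps, ~~ bad (inl a) -> rdok W 0 (rules M q a ps))
  (Hp : forall p q, ~~ bad (inr p) -> W (OQP q p) = 0) a (ts : seq IT)
  (Hr : forall q ps, rdok W 1 (rules M q a ps)) :
  wf (@ilab_rk _ _ M) (Node (inl a) ts) -> all (fun u => ~~ has_label bad u) ts ->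
  forall q g, wy W g (Mhat (Node (inl a) ts) q) <=
              Defs.tsize (rules M q a (map (@run _ _ M) ts)) + mb g (rk q).
Proof.
move=> /= /andP [/eqP Hsz Hall] Hn q g /=.
have := evalr_bound (Ms := map (@Mhat _ _ M) ts) (k := rk a) (m := rk q) (e := 1) g _
    (@rules_wf _ _ M q a (map (@run _ _ M) ts) ltac:(by rewrite size_map)) (Hr q _).
rewrite mul1n; apply => i q' g' Hi.
rewrite -Hsz in Hi.
rewrite (nth_map (Node (inl a) [::])) //.
have Hu := nth_In (Node (inl a) [::]) Hi.
exact: (@Mhat_zero W bad Hs Hp _ (all_In Hall Hu) (all_In Hn Hu) q' g').
Qed.

Variable mk : sym Sg -> bool.
Definition mk' (x : sym Sg + P) : bool := if x is inl a then mk a else false.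

Fixpoint repl (t : IT) : IT :=
  match t with
  | Node (inl a) ts => if mk a then Node (inr (run t)) [::] else Node (inl a) (map repl ts)
  | _ => t
  end.

Fixpoint good (t : IT) : bool :=
  match t with
  | Node (inl a) ts => if mk a then all (fun u => ~~ has_label mk' u) ts else all good ts
  | _ => true
  end.

Lemma run_repl t : run (repl t) = run t.
Proof.
elim/tree_ind2: t => [[a|p] ts IH] //=; case: (mk a) => //=.
by rewrite -map_comp; congr (lah _ _ _); apply: map_ext_In.
Qed.

Lemma main_ineq W1 W2 K (HW : forall l, W1 l <= W2 l) (HK : forall q p, K <= W2 (OQP q p))
  (Hroot : forall a (ts : seq IT), mk a -> wf (@ilab_rk _ _ M) (Node (inl a) ts) ->
     all (fun u => ~~ has_label mk' u) ts ->
     forall q g, wy W1 g (Mhat (Node (inl a) ts) q) <= K + mb g (rk q)) (t : IT) :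
  wf (@ilab_rk _ _ M) t -> good t -> forall q g, wy W1 g (Mhat t q) <= wy W2 g (Mhat (repl t) q).
Proof.
elim/tree_ind2: t => [[a|p] ts IH] Hwf Hg q g.
- rewrite /=; case Hm: (mk a); move: Hg; rewrite /= Hm => Hg.
    apply: leq_trans (Hroot a ts Hm Hwf Hg q g) _.
    change (K + mb g (rk q) <= wy W2 g (Node (OQP q (run (Node (inl a) ts))) (mkseq (yleaf M) (rk q)))).
    by rewrite wy_leaf leq_add2r.
  move: Hwf => /andP [_ Hall] /=.
  rewrite (_ : map (@run _ _ M) (map repl ts) = map (@run _ _ M) ts); last first.
    by rewrite -map_comp; apply: eq_map => u; exact: run_repl.
  apply: evalr_mono => // i q' g'.
  case: (ltnP i (size ts)) => Hi.
    rewrite !(nth_map (Node (inl a) [::])) ?size_map //.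
    have Hu := nth_In (Node (inl a) [::]) Hi.
    exact: IH _ Hu (all_In Hall Hu) (all_In Hg Hu) q' g'.
  by rewrite !nth_default ?size_map.
- by apply: wy_mono.
Qed.
End S2.


Lemma all_ext_In (T : Type) (p1 p2 : pred T) s :
  (forall u, List.In u s -> p1 u = p2 u) -> all p1 s = all p2 s.
Proof.
elim: s => //= u us IH H; rewrite H; last by left.
by rewrite IH // => v Hv; apply: H; right.
Qed.

Lemma has_ext_In (T : Type) (p1 p2 : pred T) s :
  (forall u, List.In u s -> p1 u = p2 u) -> has p1 s = has p2 s.
Proof.
elim: s => //= u us IH H; rewrite H; last by left.
by rewrite IH // => v Hv; apply: H; right.
Qed.

Lemma sumn_ext_In (T : Type) (f g : T -> nat) s :
  (forall u, List.In u s -> f u = g u) -> sumn (map f s) = sumn (map g s).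
Proof. by move=> H; rewrite (map_ext_In H). Qed.

Section TM.
Variables (A B : Type) (f : A -> B).

Lemma wf_tmap (rk1 : A -> nat) (rk2 : B -> nat) (H : forall x, rk2 (f x) = rk1 x) t :
  wf rk2 (tmap f t) = wf rk1 t.
Proof.
elim/tree_ind2: t => a ts IH /=; rewrite size_map H all_map; congr (_ && _).
exact: all_ext_In.
Qed.

Lemma has_tmap (p : B -> bool) t : has_label p (tmap f t) = has_label (fun x => p (f x)) t.
Proof.
elim/tree_ind2: t => a ts IH /=; rewrite has_map; congr (_ || _); exact: has_ext_In.
Qed.

Lemma count_tmap (p : B -> bool) t :
  count_label p (tmap f t) = count_label (fun x => p (f x)) t.
Proof.
elim/tree_ind2: t => a ts IH /=; rewrite -map_comp; congr (_ + _); exact: sumn_ext_In.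
Qed.

Lemma height_tmap t : height (tmap f t) = height t.
Proof.
elim/tree_ind2: t => a ts IH /=; rewrite -map_comp; do 2 f_equal; exact: map_ext_In.
Qed.

Lemma tsize_tmap t : Defs.tsize (tmap f t) = Defs.tsize t.
Proof.
elim/tree_ind2: t => a ts IH /=; rewrite -map_comp; do 2 f_equal; exact: map_ext_In.
Qed.

Lemma tmap_comp (C : Type) (g : B -> C) t : tmap g (tmap f t) = tmap (fun x => g (f x)) t.
Proof.
elim/tree_ind2: t => a ts IH /=; rewrite -map_comp; f_equal; exact: map_ext_In.
Qed.
End TM.

Lemma tmap_id (A : Type) (f : A -> A) (H : forall x, f x = x) t : tmap f t = t.
Proof.
elim/tree_ind2: t => a ts IH /=; rewrite H; f_equal.
by rewrite -{2}(map_id ts); apply: map_ext_In.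
Qed.

Lemma has_count_label (A : Type) (p : A -> bool) t : has_label p t = (0 < count_label p t).
Proof.
elim/tree_ind2: t => a ts IH /=; rewrite addn_gt0 lt0b; congr (_ || _).
elim: ts IH => //= u us IHs IH; rewrite addn_gt0 IH; last by left.
by rewrite IHs // => v Hv; apply: IH; right.
Qed.

Section Col.
Variables (Sg D : ranked) (M : mttr Sg D) (N : nat).

Definition Sg' : ranked := Ranked (fun x : (sym Sg * 'I_N)%type => rk x.1).
Definition D' : ranked := Ranked (fun x : (sym D * 'I_N)%type => rk x.1).

Definition relab (c : 'I_N) (l : rlab D (st M)) : rlab D' (st M) :=
  match l with RD d => RD ((d, c) : sym D') | RQ q i => RQ q i | RY j => RY j end.

Lemma wf_relab c k m r : wf_rhs k m (tmap (relab c) r) = wf_rhs k m r.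
Proof.
elim/tree_ind2: r => [[d|q i|j] ts IH] /=; rewrite ?size_map ?all_map //;
  congr (_ && _); exact: all_ext_In.
Qed.

Definition rules' (q : sym (st M)) (a : sym Sg') (ps : seq (la M)) :=
  tmap (relab a.2) (rules M q a.1 ps).

Lemma rules'_wf q a ps : size ps = rk a -> wf_rhs (rk a) (rk q) (rules' q a ps).
Proof. by move=> H; rewrite /rules' wf_relab; apply: rules_wf. Qed.

Definition M' : mttr Sg' D' :=
  @Mttr Sg' D' (st M) (la M) (fun a ps => lah M a.1 ps) (q0 M) rules' (q0_rk M) rules'_wf.

End Col.

Section Er.
Variables (Sg D : ranked) (M : mttr Sg D) (N : nat).
Local Notation M1 := (M' M N).
Local Notation Q := (sym (st M)).
Local Notation P := (la M).

Definition er (l : olab (D' D N) (st M) P) : olab D (st M) P :=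
  match l with OD d => OD d.1 | OQP q p => OQP q p | OY j => OY j end.
Definition uc (x : sym (Sg' Sg N) + P) : sym Sg + P :=
  match x with inl a => inl a.1 | inr p => inr p end.

Lemma run_uc (t : itree M1) : run t = run (M := M) (tmap uc t).
Proof.
elim/tree_ind2: t => [[a|p] ts IH] //=; rewrite -map_comp; congr (lah _ _ _).
exact: map_ext_In.
Qed.

Lemma subst_ext (Sg1 D1 : ranked) (M2 : mttr Sg1 D1) f g T :
  (forall j, f j = g j) -> subst (M := M2) f T = subst (M := M2) g T.
Proof.
move=> H; elim/tree_ind2: T => [[d|q p|j] ts IH] //=; f_equal; exact: map_ext_In.
Qed.

Lemma subst_er f (T : tree (olab (D' D N) (st M) P)) :
  tmap er (subst (M := M1) f T) = subst (M := M) (fun j => tmap er (f j)) (tmap er T).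
Proof.
elim/tree_ind2: T => [[d|q p|j] ts IH] //=; rewrite -!map_comp; f_equal;
  apply: map_ext_In => u Hu; exact: IH.
Qed.

Lemma evalr_er (Ms1 : seq (Q -> tree (olab (D' D N) (st M) P))) (Ms : seq (Q -> tree (olab D (st M) P)))
  (H : forall i q, tmap er (nth (fun _ => yleaf M1 0) Ms1 i q) = nth (fun _ => yleaf M 0) Ms i q) c r :
  tmap er (evalr (M := M1) Ms1 (tmap (relab (M := M) c) r)) = evalr (M := M) Ms r.
Proof.
elim/tree_ind2: r => [[d|q i|j] ts IH] //=.
- rewrite -!map_comp; f_equal; apply: map_ext_In => u Hu; exact: IH.
- rewrite subst_er H; apply: subst_ext => j.
  case: (ltnP j (size ts)) => Hj.
    rewrite (nth_map (Node (RY 0) [::])) ?size_map // (nth_map (Node (RY 0) [::])) //.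
    rewrite (nth_map (Node (RY 0) [::])) //.
    exact: IH (nth_In _ Hj).
  by rewrite !nth_default ?size_map.
Qed.

Lemma Mhat_er (t : itree M1) q : tmap er (Mhat t q) = Mhat (M := M) (tmap uc t) q.
Proof.
elim/tree_ind2: t q => [[a|p] ts IH] q /=.
- rewrite /rules' -!map_comp.
  rewrite (map_ext_In (f := fun x => run (M := M1) x) (g := fun x => run (M := M) (tmap uc x))); last first.
    by move=> u _; exact: run_uc.
  apply: evalr_er => i q'.
  case: (ltnP i (size ts)) => Hi.
    rewrite (nth_map (Node (inl a) [::])) // (nth_map (Node (inl a) [::])) //.
    exact: IH (nth_In _ Hi) q'.
  by rewrite !nth_default ?size_map.
- by rewrite /mkseq -!map_comp.
Qed.

Lemma wy_er W g (T : tree (olab (D' D N) (st M) P)) :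
  wy W g (tmap er T) = wy (fun l => W (er l)) g T.
Proof.
elim/tree_ind2: T => [[d|q p|j] ts IH] //=; rewrite -map_comp; do 2 f_equal;
  apply: map_ext_In => u Hu; exact: IH.
Qed.

End Er.


Lemma all_of_In (T : Type) (p : pred T) s : (forall u, List.In u s -> p u) -> all p s.
Proof.
elim: s => //= u us IH H; rewrite H; last by left.
by apply: IH => v Hv; apply: H; right.
Qed.

Lemma has_label_false (A : Type) (p : A -> bool) t : (forall x, p x = false) -> has_label p t = false.
Proof.
move=> H; elim/tree_ind2: t => a ts IH /=; rewrite H /=.
elim: ts IH => //= u us IHs IH; rewrite IH; last by left.
by apply: IHs => v Hv; apply: IH; right.
Qed.

Section R.
Variables (Sg D : ranked) (M : mttr Sg D) (mk : sym Sg -> bool).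
Local Notation IT := (itree M).

Lemma count0_has (A : Type) (p : A -> bool) t : count_label p t = 0 -> ~~ has_label p t.
Proof. by rewrite has_count_label => ->. Qed.

Lemma sumn_le1 (T : Type) (h : T -> nat) ts u : sumn (map h ts) <= 1 -> List.In u ts -> h u <= 1.
Proof. by move=> H Hu; apply: leq_trans (le_sumn h Hu) H. Qed.

Lemma sumn0_In (T : Type) (h : T -> nat) ts u : sumn (map h ts) = 0 -> List.In u ts -> h u = 0.
Proof. by move=> H Hu; apply/eqP; rewrite -leqn0 -H; apply: le_sumn. Qed.

Lemma good_of_count (t : IT) : count_label (mk' mk) t <= 1 -> good mk t.
Proof.
elim/tree_ind2: t => [[a|p] ts IH] //=; case Hm: (mk a) => /= H.
  apply: all_of_In => u Hu; apply: count0_has; apply: sumn0_In Hu.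
  by move: H; rewrite add1n ltnS leqn0 => /eqP.
apply: all_of_In => u Hu; apply: IH => //; exact: sumn_le1 H Hu.
Qed.

Lemma wf_repl (t : IT) : wf (@ilab_rk _ _ M) t -> wf (@ilab_rk _ _ M) (repl mk t).
Proof.
elim/tree_ind2: t => [[a|p] ts IH] //=; case: (mk a) => //= /andP [Hs Ha].
rewrite size_map Hs all_map /=; apply: all_of_In => u Hu; apply: IH => //; exact: all_In Ha Hu.
Qed.

Lemma nomk_repl' (t : IT) : wf (@ilab_rk _ _ M) t -> has_label (mk' mk) (repl mk t) = false.
Proof.
elim/tree_ind2: t => [[a|p] ts IH] /= Hwf.
- case Hm: (mk a) => //=; rewrite Hm /=.
  move: Hwf => /andP [_ Hall].
  elim: ts IH Hall => //= u us IHs IH /andP [Hu Hus]; rewrite IH //; last by left.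
  by apply: IHs => // v Hv; apply: IH; right.
- by case: ts IH Hwf.
Qed.

Lemma count_repl (t : IT) : ~~ has_label (@is_P _ _ M) t -> good mk t ->
  count_label (@is_P _ _ M) (repl mk t) = count_label (mk' mk) t.
Proof.
elim/tree_ind2: t => [[a|p] ts IH] //=; case Hm: (mk a) => /= Hp Hg.
  suff -> : sumn (map (count_label (mk' mk)) ts) = 0 by [].
  elim: ts Hg {IH Hp} => //= u us IHs /andP [Hu Hus]; rewrite IHs //.
  by move: Hu; rewrite has_count_label lt0n negbK => /eqP ->.
rewrite -map_comp; congr (_ + _); apply: sumn_ext_In => u Hu /=.
by apply: IH => //; [exact: nhas_In Hp Hu | exact: all_In Hg Hu].
Qed.
End R.


Fixpoint col (A : Type) (t : tree A) (n : nat) : tree (A * nat) :=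
  match t with
  | Node a ts => Node (a, n)
      ((fix go (ts : seq (tree A)) (m : nat) : seq (tree (A * nat)) :=
          match ts with [::] => [::] | u :: us => col u m :: go us (m + Defs.tsize u) end) ts n.+1)
  end.

Lemma col_count (A : Type) (pk : nat -> bool) (t : tree A) n :
  count_label (fun x => pk x.2) (col t n) = count pk (iota n (Defs.tsize t)).
Proof.
elim/tree_ind2: t n => a ts IH n /=; congr (_ + _).
move: n.+1 => m; elim: ts m IH => //= u us IHs m IH.
rewrite iotaD count_cat IH; last by left.
by rewrite IHs // => v Hv; apply: IH; right.
Qed.

Lemma col_erase (A : Type) (t : tree A) n : tmap fst (col t n) = t.
Proof.
elim/tree_ind2: t n => a ts IH n /=; f_equal.
move: n.+1 => m; elim: ts m IH => //= u us IHs m IH.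
rewrite IH; last by left.
by rewrite IHs // => v Hv; apply: IH; right.
Qed.

Lemma count_ext (A : Type) (p p' : A -> bool) (H : forall x, p x = p' x) t :
  count_label p t = count_label p' t.
Proof. elim/tree_ind2: t => a ts IH /=; rewrite H; congr (_ + _); exact: sumn_ext_In. Qed.

Lemma wy_ext (D Q : ranked) (P : Type) (W W' : olab D Q P -> nat) g t :
  (forall l, W l = W' l) -> wy W g t = wy W' g t.
Proof.
by move=> H; apply/eqP; rewrite eqn_leq !wy_mono // => l; rewrite H.
Qed.

Lemma mb0 n : mb (fun _ => 0) n = 0.
Proof. by apply/eqP; rewrite -leqn0; apply: mb_le. Qed.

Definition isQPn (D Q : ranked) (P : Type) (l : olab D Q P) : nat :=
  if l is OQP _ _ then 1 else 0.

Section Main.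
Variables (Sg D : ranked) (M : mttr Sg D).

Definition Kmax := \max_(q : sym (st M)) \max_(a : sym Sg)
  \max_(ps : (rk a).-tuple (la M)) Defs.tsize (rules M q a ps).

Lemma K_ge q a ps : size ps = rk a -> Defs.tsize (rules M q a ps) <= Kmax.
Proof.
move=> /eqP H; pose tp : (rk a).-tuple (la M) := Tuple H.
apply: leq_trans (leq_bigmax q); apply: leq_trans (leq_bigmax a).
exact: (leq_bigmax (F := fun ps : (rk a).-tuple (la M) => Defs.tsize (rules M q a ps)) tp).
Qed.

Variables (N b : nat).
Hypothesis Hb : forall t : itree M, wf (@ilab_rk _ _ M) t -> count_label (@is_P _ _ M) t = 1 ->
    forall pi, List.In pi (paths (Mhat t (q0 M))) -> nesting pi <= b.
Local Notation M1 := (M' M N).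

Definition W1 (i : 'I_N) (l : olab (D' D N) (st M) (la M)) : nat :=
  if l is OD d then nat_of_bool (d.2 == i) else 0.
Definition W2 (i : 'I_N) l := W1 i l + Kmax * isQPn l.

Lemma rdok_M1 (W : olab (D' D N) (st M) (la M) -> nat) e q (a : sym (Sg' Sg N)) ps :
  (forall d : sym D, W (OD ((d, a.2) : sym (D' D N))) <= e) -> rdok (M := M1) W e (rules M1 q a ps).
Proof.
move=> H; rewrite /rdok.
change (rules M1 q a ps) with (tmap (relab (M := M) a.2) (rules M q a.1 ps)).
by rewrite has_tmap has_label_false // => -[d|q' j|j] //=; rewrite ltnNge H.
Qed.

Lemma color_bound (t1 : itree M1) (i : 'I_N) :
  wf (@ilab_rk _ _ M1) t1 -> ~~ has_label (@is_P _ _ M1) t1 ->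
  count_label (mk' (fun a : sym (Sg' Sg N) => a.2 == i)) t1 <= 1 ->
  wy (W1 i) (fun _ => 0) (Mhat t1 (q0 M1)) <= Kmax * b.
Proof.
set mk := (fun a : sym (Sg' Sg N) => a.2 == i).
move=> Hwf HnP Hc.
have Hs : forall (a : sym (Sg' Sg N)) (q : sym (st M)) (ps : seq (la M)),
    ~~ mk' (M := M1) mk (inl a) -> rdok (M := M1) (W1 i) 0 (rules M1 q a ps).
  move=> a q ps Ha; apply: rdok_M1 => d; move: Ha; rewrite /mk' /mk /= => /negbTE -> //.
have Hp : forall (p : la M) (q : sym (st M)), ~~ mk' (M := M1) mk (inr p) -> W1 i (OQP q p) = 0 by [].
case: (posnP (count_label (mk' mk) t1)) => Hc0.
  have Z := @Mhat_zero _ _ M1 (W1 i) (mk' mk) Hs Hp t1 Hwf (count0_has Hc0) (q0 M1) (fun _ => 0).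
  apply: leq_trans Z _.
  by rewrite mb0.
have Hc1 : count_label (mk' mk) t1 = 1 by apply/eqP; rewrite eqn_leq Hc Hc0.
have Hgood := good_of_count Hc.
have Hroot : forall a (ts : seq (itree M1)), mk a -> wf (@ilab_rk _ _ M1) (Node (inl a) ts) ->
     all (fun u => ~~ has_label (mk' mk) u) ts ->
     forall q g, wy (W1 i) g (Mhat (Node (inl a) ts) q) <= Kmax + mb g (rk q).
  move=> a ts Hm Hwf' Hall q g.
  have Hr : forall q ps, rdok (M := M1) (W1 i) 1 (rules M1 q a ps).
    by move=> q' ps; apply: rdok_M1 => d /=; case: (_ == _).
  have Z := @Mhat_root _ _ M1 (W1 i) (mk' mk) Hs Hp a ts Hr Hwf' Hall q g.
  apply: leq_trans Z _; rewrite leq_add2r.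
  change (Defs.tsize (tmap (relab (M := M) a.2) (rules M q a.1 (map (@run _ _ M1) ts))) <= Kmax).
  rewrite tsize_tmap; apply: K_ge; rewrite size_map.
  by move: Hwf' => /= /andP [/eqP -> _].
have HW : forall l, W1 i l <= W2 i l by move=> l; rewrite leq_addr.
have HK : forall q p, Kmax <= W2 i (OQP q p) by move=> q p; rewrite /W2 /= muln1.
have Z := @main_ineq _ _ M1 mk (W1 i) (W2 i) Kmax HW HK Hroot t1 Hwf Hgood (q0 M1) (fun _ => 0).
apply: leq_trans Z _.
set T' := Mhat (repl mk t1) (q0 M1).
apply: leq_trans (wy_add _ _ _) _.
have -> : wy (W1 i) (fun _ => 0) T' = 0.
  apply/eqP; rewrite -leqn0.
  have Z' := (@Mhat_zero _ _ M1 (W1 i) (mk' mk) Hs Hp _ (wf_repl mk Hwf) (negbT (nomk_repl' mk Hwf)) (q0 M1) (fun _ => 0)).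
  by apply: leq_trans Z' _; rewrite mb0.
rewrite add0n; apply: leq_trans (wy_scale _ _ _) _; rewrite leq_mul2l; apply/orP; right.
have E1 : wy (@isQPn (D' D N) (st M) (la M)) (fun _ => 0) T' = wy (fun l => @isQPn D (st M) (la M) (@er _ _ M N l)) (fun _ => 0) T'.
  by apply: wy_ext; case.
rewrite E1 -wy_er /T' Mhat_er.
set t0 := tmap (@uc _ _ M N) (repl mk t1).
have [pi Hpi Hle] := paths_wy (@is_QP _ _ M) (Mhat t0 (q0 M)).
rewrite (wy_ext (W' := fun l => nat_of_bool (is_QP l))); last by case.
apply: leq_trans Hle _; apply: Hb Hpi.
  rewrite /t0 (wf_tmap (rk1 := @ilab_rk _ _ M1)); last by case.
  exact: wf_repl.
rewrite /t0 count_tmap (count_ext (p' := @is_P _ _ M1)); last by case.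
by rewrite count_repl.
Qed.
End Main.

Unset Implicit Arguments.

Theorem mainTheorem4 (Sg D : ranked) (M : mttr Sg D) :
  depth_proper M -> finite_nesting M -> LSHI M.
Proof.
move=> _ [b Hb].
exists (2 * (Kmax M * b)) => t Hwf.
set N := (Defs.tsize t).+1.
set tc : tree (sym (Sg' Sg N)) := tmap (fun x => ((x.1, inord x.2) : sym (Sg' Sg N))) (col t 0).
set t1 : itree (M' M N) := tmap inl tc.
have Huc : tmap (@uc _ _ M N) t1 = @inj _ _ M t.
  rewrite /t1 /tc !tmap_comp /inj.
  have -> : tmap inl t = tmap inl (tmap fst (col t 0)) by rewrite col_erase.
  by rewrite tmap_comp.
have Hwf1 : wf (@ilab_rk _ _ (M' M N)) t1.
  rewrite -(wf_tmap (f := @uc _ _ M N) (rk2 := @ilab_rk _ _ M)); last by case.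
  by rewrite Huc /inj (wf_tmap (rk1 := @rk Sg)).
have HnP : ~~ has_label (@is_P _ _ (M' M N)) t1.
  by rewrite /t1 has_tmap has_label_false.
have Hcnt : forall i : 'I_N, count_label (mk' (M := M' M N) (fun a : sym (Sg' Sg N) => a.2 == i)) t1 <= 1.
  move=> i; rewrite /t1 count_tmap /tc count_tmap.
  rewrite (count_ext (p' := fun x => (fun c => inord c == i) x.2)) //.
  rewrite (col_count (fun c => inord c == i)).
  rewrite (eq_in_count (a2 := pred1 (val i))); last first.
    move=> c; rewrite mem_iota add0n => /andP [_ Hc] /=.
    by rewrite -(inj_eq val_inj) /= inordK // ltnW.
  by rewrite count_uniq_mem ?iota_uniq // leq_b1.
set T := Mhat t1 (q0 (M' M N)).
have HT : tmap (@er _ _ M N) T = Mout M t by rewrite /T Mhat_er Huc.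
rewrite -HT height_tmap height_wy; last first.
  apply/eqP; rewrite -leqn0.
  have Hs0 : forall (a : sym (Sg' Sg N)) (q : sym (st M)) (ps : seq (la M)),
      ~~ (fun _ : sym (Sg' Sg N) + la M => false) (inl a) ->
      rdok (M := M' M N) (fun _ => 0) 0 (rules (M' M N) q a ps).
    by move=> a q ps _; rewrite /rdok has_label_false // => -[].
  have Z := @Mhat_zero _ _ (M' M N) (fun _ => 0) (fun _ => false) Hs0
     (fun p q _ => erefl) t1 Hwf1 (negbT (has_label_false t1 (fun _ => erefl))) (q0 (M' M N)) (fun _ => 1).
  by apply: leq_trans Z _; rewrite (q0_rk M).
have Hs1 : forall (a : sym (Sg' Sg N)) (q : sym (st M)) (ps : seq (la M)),
    ~~ (@is_P _ _ (M' M N)) (inl a) ->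
    rdok (M := M' M N) (@isQPn (D' D N) (st M) (la M)) 0 (rules (M' M N) q a ps).
  by move=> a q ps _; rewrite /rdok has_label_false // => -[].
have HQP : wy (@isQPn (D' D N) (st M) (la M)) (fun _ => 0) T = 0.
  apply/eqP; rewrite -leqn0.
  have Z := @Mhat_zero _ _ (M' M N) (@isQPn (D' D N) (st M) (la M)) (@is_P _ _ (M' M N)) Hs1
     (fun p q H => False_ind _ (negP H isT)) t1 Hwf1 HnP (q0 (M' M N)) (fun _ => 0).
  by apply: leq_trans Z _; rewrite mb0.
pose WT (l : olab (D' D N) (st M) (la M)) :=
  \sum_(i < N) W1 (M := M) i l + (isQPn l + (if l is OY _ then 1 else 0)).
have H1 : wy (fun _ => 1) (fun _ => 0) T <= wy WT (fun _ => 0) T.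
  apply: wy_mono => // -[d|q p|j] /=; rewrite /WT.
  - rewrite (bigD1 d.2) //= /W1 /= eqxx -addnA; exact: leq_addr.
  - by rewrite /= addn0 addn1.
  - by rewrite /= !addn1.
apply: leq_trans H1 _.
apply: leq_trans (wy_add _ _ _) _.
apply: leq_trans (leq_add (wy_sum _ _) (wy_add _ _ _)) _.
rewrite HQP wy_OY !addn0.
have HS : \sum_(i < N) wy (W1 (M := M) i) (fun _ => 0) T <= \sum_(i < N) Kmax M * b.
  by apply: leq_sum => i _; apply: color_bound => //; exact: Hb.
apply: leq_trans HS _.
rewrite sum_nat_const card_ord.
have Hpos : 0 < Defs.tsize t by case: (t).
rewrite mulnAC; apply: leq_mul => //.
by rewrite /N mul2n -addnn -add1n leq_add2r.
Qed.
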